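(* For every integer $k\ge1$ we have $I_k\subseteq B_k$.
   Context: Let $K$ be a field and $A$ the free associative (non-unital) $K$-algebra on free generators $x_0,x_1,x_2,\dots$, with $K$-basis of monomials; $A^1$ is $A$ with unity adjoined. For $n\ge1$, $A(n)$ is the $K$-span of monomials of length $n$, and $A(0)=K$. For a monomial $s=x_{i_1}\cdots x_{i_n}$ write $s[q]=x_{i_q}$. Let $D$ be the derivation of $A$ with $D(x_i)=x_{i+1}$. For $k\ge1$ let $\mathcal X_k=\{x_0,\dots,x_{k-1}\}$; for $n\ge1$ let $W(k,n,0)$ be the set of monomials of length $n$ all of whose letters lie in $\mathcal X_k$, $W(k,n,l+1)=\{D(w):w\in W(k,n,l)\}$, $W(k,n)=\bigcup_{t\ge0}W(k,n,t)$, and let $I_k$ be the two-sided ideal of $A$ generated by $W(k,2\cdot100^{k^2})$. $Z_k$ is the set of all elements $a\in A$ of one of the forms: (1) $a=\kappa s$, $\kappa\in K$, $s$ a monomial of length $100^{k^2}-1$ with $s[3^p\cdot100^{(k-1)^2}]=s[3^q\cdot100^{(k-1)^2}]$ for some $0\le p<q\le k$; (2) $a=\kappa(s_1+s_2)$, $\kappa\in K$, $s_1,s_2$ monomials of length $100^{k^2}-1$, with integers $0\le p<q\le k$ and $l_1>l_2\ge0$ such that $s_1$ has $x_{l_1}$ at position $3^p\cdot100^{(k-1)^2}$ and $x_{l_2}$ at position $3^q\cdot100^{(k-1)^2}$, $s_2$ has $x_{l_2}$ and $x_{l_1}$ at these positions respectively, and $s_1,s_2$ agree at all other positions. Finally $B_k=\sum_{m\ge0}A(m\cdot100^{k^2})\,Z_k\,A^1$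 (the $K$-span of products $uzv$ with $u\in A(m\cdot100^{k^2})$, $m\ge0$, $z\in Z_k$, $v\in A^1$). *)

(* Defs.v *)
From HB Require Import structures.
From mathcomp Require Import all_boot all_order all_algebra.
Set Implicit Arguments. Unset Strict Implicit. Unset Printing Implicit Defensive.
Import GRing.Theory.
Local Open Scope ring_scope.

(* Words (monomials) x_{i_1}...x_{i_n} are represented as seq nat [:: i_1; ...; i_n].
   Elements of A^1 (free unital algebra) are finitely supported coefficient functions
   word -> K; A is the subset with zero coefficient on the empty word. *)
Definition word := seq nat.
Definition elt (K : fieldType) := word -> K.

Section Alg.
Variable K : fieldType.

Definition finsupp (f : elt K) : Prop :=
  exists s : seq word, forall w, f w != 0 -> w \in s.

Definition inA1 (f : elt K) : Prop := finsupp f.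
Definition inA (f : elt K) : Prop := finsupp f /\ f [::] = 0.
Definition inAdeg (n : nat) (f : elt K) : Prop :=
  finsupp f /\ forall w, f w != 0 -> size w = n.

Definition zeroE : elt K := fun _ => 0.
Definition addE (f g : elt K) : elt K := fun w => f w + g w.
Definition scaleE (c : K) (f : elt K) : elt K := fun w => c * f w.
Definition mon (u : word) : elt K := fun w => (w == u)%:R.
Definition mulE (f g : elt K) : elt K :=
  fun w => \sum_(i < (size w).+1) f (take i w) * g (drop i w).

(* The derivation D with D(x_i) = x_{i+1}: coefficient of w in D f is the sum,
   over positions q with w[q] = j+1, of the coefficient of f at w with w[q] := j. *)
Definition Dder (f : elt K) : elt K :=
  fun w => \sum_(q < size w)
             (if (0 < nth 0%N w q)%N then f (set_nth 0%N w q (nth 0%N w q).-1) else 0).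

Inductive span (P : elt K -> Prop) : elt K -> Prop :=
| span_gen a : P a -> span P a
| span0 : span P zeroE
| spanD a b : span P a -> span P b -> span P (addE a b)
| spanZ c a : span P a -> span P (scaleE c a).

Inductive ideal (P : elt K -> Prop) : elt K -> Prop :=
| ideal_gen a : P a -> ideal P a
| ideal0 : ideal P zeroE
| idealD a b : ideal P a -> ideal P b -> ideal P (addE a b)
| idealZ c a : ideal P a -> ideal P (scaleE c a)
| idealMl u a : inA u -> ideal P a -> ideal P (mulE u a)
| idealMr a v : inA v -> ideal P a -> ideal P (mulE a v).

Definition Wset (k n : nat) (a : elt K) : Prop :=
  exists (t : nat) (w : word),
    [/\ size w = n, all (fun i => (i < k)%N) w & a = iter t Dder (mon w)].

Definition Nk (k : nat) : nat := (100 ^ (k ^ 2))%N.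
Definition Mk (k : nat) : nat := (100 ^ ((k.-1) ^ 2))%N.

Definition Ik (k : nat) : elt K -> Prop := ideal (Wset k (2 * Nk k)%N).

(* letter at 1-indexed position q *)
Definition letter (s : word) (q : nat) : nat := nth 0%N s q.-1.

Definition Zk (k : nat) (a : elt K) : Prop :=
  (exists (c : K) (s : word) (p q : nat),
     [/\ size s = (Nk k).-1, (p < q <= k)%N,
         letter s (3 ^ p * Mk k)%N = letter s (3 ^ q * Mk k)%N
       & a = scaleE c (mon s)])
  \/
  (exists (c : K) (s1 s2 : word) (p q l1 l2 : nat),
     [/\ size s1 = (Nk k).-1 /\ size s2 = (Nk k).-1, (p < q <= k)%N, (l2 < l1)%N,
         ([/\ letter s1 (3 ^ p * Mk k)%N = l1, letter s1 (3 ^ q * Mk k)%N = l2,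
             letter s2 (3 ^ p * Mk k)%N = l2 & letter s2 (3 ^ q * Mk k)%N = l1] /\
         (forall r, (1 <= r <= (Nk k).-1)%N -> r != (3 ^ p * Mk k)%N ->
            r != (3 ^ q * Mk k)%N -> letter s1 r = letter s2 r))
       & a = scaleE c (addE (mon s1) (mon s2))]).

Definition Bk (k : nat) : elt K -> Prop :=
  span (fun a => exists (m : nat) (u z v : elt K),
          [/\ inAdeg (m * Nk k)%N u, Zk k z, inA1 v & a = mulE (mulE u z) v]).

End Alg.

(* Main.v *)
Require Import Defs.
From mathcomp Require Import all_boot all_order all_algebra.
From mathcomp Require Import zify ring.
From Stdlib Require Import FunctionalExtensionality.
Set Implicit Arguments. Unset Strict Implicit. Unset Printing Implicit Defensive.
Import GRing.Theory.
Local Open Scope ring_scope.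

Notation dspan := Defs.span.
Notation dideal := Defs.ideal.

Lemma eltE (K : fieldType) (f g : elt K) : (forall w, f w = g w) -> f = g.
Proof. move=> H; exact: functional_extensionality H. Qed.

Lemma eq_cat_split (w a b : word) :
  (w == a ++ b) = (take (size a) w == a) && (drop (size a) w == b).
Proof.
case: (leqP (size a) (size w)) => H.
  rewrite -{1}(cat_take_drop (size a) w) eqseq_cat // size_take_min.
  by apply/minn_idPl.
rewrite take_oversize ?(ltnW H) //.
have -> : (w == a ++ b) = false.
  by apply/negbTE/eqP => E; move: H; rewrite E size_cat; lia.
have -> // : (w == a) = false.
by apply/negbTE/eqP => E; move: H; rewrite E ltnn.
Qed.

Lemma mulE_monl (K : fieldType) (a : word) (g : elt K) :
  mulE (mon K a) g = fun w => if take (size a) w == a then g (drop (size a) w) else 0.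
Proof.
apply: eltE => w; rewrite /mulE /mon.
case: (leqP (size a) (size w)) => H.
  rewrite (bigD1 (@Ordinal (size w).+1 (size a) (H : (size a < (size w).+1)%N))) //=.
  rewrite big1 ?addr0; first by case: eqP => _; rewrite ?mul1r ?mul0r.
  move=> i /eqP Hi; have -> : (take i w == a) = false.
    apply/negbTE/eqP => E; apply: Hi; apply: val_inj => /=.
    rewrite -E size_takel //; by rewrite -ltnS (ltn_ord i).
  by rewrite mul0r.
rewrite take_oversize ?(ltnW H) //.
have -> : (w == a) = false by apply/negbTE/eqP=> E; move: H; rewrite E ltnn.
apply: big1 => i _; have -> // : (take i w == a) = false.
  apply/negbTE/eqP => E; move: H; rewrite -E size_take_min; lia.
by rewrite mul0r.
Qed.

Lemma mulE_monr (K : fieldType) (a : word) (g : elt K) :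
  mulE g (mon K a) = fun w => if (size a <= size w)%N && (drop (size w - size a) w == a)
                              then g (take (size w - size a) w) else 0.
Proof.
apply: eltE => w; rewrite /mulE /mon.
case: (leqP (size a) (size w)) => H /=.
  have Hi0 : (size w - size a < (size w).+1)%N by lia.
  rewrite (bigD1 (Ordinal Hi0)) //=.
  rewrite big1 ?addr0; first by case: eqP => _; rewrite ?mulr1 ?mulr0.
  move=> i /eqP Hi; have -> : (drop i w == a) = false.
    apply/negbTE/eqP => E; apply: Hi; apply: val_inj => /=.
    have := ltn_ord i; rewrite -E size_drop; lia.
  by rewrite mulr0.
apply: big1 => i _; have -> // : (drop i w == a) = false.
  apply/negbTE/eqP => E; move: H; rewrite -E size_drop; lia.
by rewrite mulr0.
Qed.

Lemma monl_cat (K : fieldType) (a a' y : word) (g : elt K) :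
  size a' = size a -> mulE (mon K a) g (a' ++ y) = if a' == a then g y else 0.
Proof.
move=> Hs; rewrite mulE_monl -Hs take_size_cat // drop_size_cat //.
Qed.

Lemma monl_short (K : fieldType) (a w : word) (g : elt K) :
  (size w < size a)%N -> mulE (mon K a) g w = 0.
Proof.
move=> H; rewrite mulE_monl take_oversize ?(ltnW H) //.
by case: eqP => // E; move: H; rewrite E ltnn.
Qed.

Lemma monr_cat (K : fieldType) (x x' y : word) (g : elt K) :
  size x' = size x -> mulE g (mon K x) (y ++ x') = if x' == x then g y else 0.
Proof.
move=> Hs; rewrite mulE_monr size_cat -Hs addnK leq_addl /=.
by rewrite drop_size_cat // take_size_cat.
Qed.

Lemma monr_short (K : fieldType) (x w : word) (g : elt K) :
  (size w < size x)%N -> mulE g (mon K x) w = 0.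
Proof. by move=> H; rewrite mulE_monr leqNgt H. Qed.

Lemma mon_cat (K : fieldType) (a b : word) :
  mulE (mon K a) (mon K b) = mon K (a ++ b).
Proof.
apply: eltE => w; rewrite mulE_monl /mon eq_cat_split.
by case: (take _ w == a) => //=; rewrite mulr0n.
Qed.

Lemma mulE_addl (K : fieldType) (f g h : elt K) :
  mulE (addE f g) h = addE (mulE f h) (mulE g h).
Proof. apply: eltE => w; rewrite /mulE /addE -big_split; apply: eq_bigr => i _; exact: mulrDl. Qed.
Lemma mulE_addr (K : fieldType) (f g h : elt K) :
  mulE h (addE f g) = addE (mulE h f) (mulE h g).
Proof. apply: eltE => w; rewrite /mulE /addE -big_split; apply: eq_bigr => i _; exact: mulrDr. Qed.
Lemma mulE_scalel (K : fieldType) c (f h : elt K) :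
  mulE (scaleE c f) h = scaleE c (mulE f h).
Proof. apply: eltE => w; rewrite /mulE /scaleE mulr_sumr; apply: eq_bigr => i _; by rewrite mulrA. Qed.
Lemma mulE_scaler (K : fieldType) c (f h : elt K) :
  mulE h (scaleE c f) = scaleE c (mulE h f).
Proof. apply: eltE => w; rewrite /mulE /scaleE mulr_sumr; apply: eq_bigr => i _; by rewrite mulrCA. Qed.
Lemma mulE_0l (K : fieldType) (h : elt K) : mulE (zeroE K) h = zeroE K.
Proof. apply: eltE => w; rewrite /mulE /zeroE; apply: big1 => i _; exact: mul0r. Qed.
Lemma mulE_0r (K : fieldType) (h : elt K) : mulE h (zeroE K) = zeroE K.
Proof. apply: eltE => w; rewrite /mulE /zeroE; apply: big1 => i _; exact: mulr0. Qed.
Lemma scaleE1 (K : fieldType) (f : elt K) : scaleE 1 f = f.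
Proof. apply: eltE => w; exact: mul1r. Qed.
Lemma addEC (K : fieldType) (f g : elt K) : addE f g = addE g f.
Proof. apply: eltE => w; exact: addrC. Qed.

Definition sumE (K : fieldType) (S : seq word) (c : word -> K) (F : word -> elt K) : elt K :=
  fun w => \sum_(x <- S) c x * F x w.

Lemma mulE_sumL (K : fieldType) S c (F : word -> elt K) h :
  mulE (sumE S c F) h = sumE S c (fun x => mulE (F x) h).
Proof.
apply: eltE => w; rewrite /mulE /sumE.
under eq_bigr do rewrite mulr_suml.
rewrite exchange_big; apply: eq_bigr => x _; rewrite mulr_sumr.
by apply: eq_bigr => i _; rewrite mulrA.
Qed.

Lemma mulE_sumR (K : fieldType) S c (F : word -> elt K) h :
  mulE h (sumE S c F) = sumE S c (fun x => mulE h (F x)).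
Proof.
apply: eltE => w; rewrite /mulE /sumE.
under eq_bigr do rewrite mulr_sumr.
rewrite exchange_big; apply: eq_bigr => x _; rewrite mulr_sumr.
by apply: eq_bigr => i _; rewrite mulrCA.
Qed.

Lemma span_sumE (K : fieldType) (P : elt K -> Prop) S c F :
  (forall x, dspan P (F x)) -> dspan P (sumE S c F).
Proof.
move=> H; elim: S => [|x S IH].
  have -> : sumE [::] c F = zeroE K by apply: eltE => w; rewrite /sumE big_nil.
  exact: span0.
have -> : sumE (x :: S) c F = addE (scaleE (c x) (F x)) (sumE S c F).
  by apply: eltE => w; rewrite /sumE big_cons.
by apply: spanD => //; apply: spanZ.
Qed.

Lemma decomp (K : fieldType) (f : elt K) : finsupp f -> exists S, f = sumE S f (mon K).
Proof.
case=> s Hs; exists (undup s); apply: eltE => w; rewrite /sumE /mon.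
case: (boolP (w \in s)) => Hw.
  rewrite (bigD1_seq w) ?mem_undup ?undup_uniq //= eqxx mulr1 big1 ?addr0 //.
  by move=> x /negbTE Hx; rewrite eq_sym Hx mulr0.
have -> : f w = 0 by apply/eqP; apply: contraNT Hw => /Hs.
rewrite big1_seq // => x /andP [_ Hx]; case: eqP; rewrite ?mulr0 //.
by move=> E; move: Hx; rewrite mem_undup -E (negbTE Hw).
Qed.

Lemma split3 (w : word) (n1 n2 : nat) : (n1 + n2 <= size w)%N ->
  w = take n1 w ++ take (size w - n1 - n2) (drop n1 w) ++ drop (size w - n2) w.
Proof.
move=> H; rewrite -{1}(cat_take_drop n1 w); congr (_ ++ _).
rewrite -{1}(cat_take_drop (size w - n1 - n2) (drop n1 w)) drop_drop; congr (_ ++ _).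
congr drop; lia.
Qed.

Lemma assoc_mm (K : fieldType) (a x : word) (f : elt K) :
  mulE (mon K a) (mulE (mon K x) f) = mulE (mon K (a ++ x)) f.
Proof.
apply: eltE => w.
case: (leqP (size a + size x) (size w)) => H.
  have E : w = take (size a) w ++ (take (size x) (drop (size a) w) ++ drop (size x) (drop (size a) w)).
    by rewrite !cat_take_drop.
  rewrite E; set a' := take _ w; set x' := take _ _; set y := drop _ (drop _ _).
  have Ha : size a' = size a by rewrite /a' size_takel //; lia.
  have Hx : size x' = size x by rewrite /x' size_takel // size_drop; lia.
  rewrite monl_cat // monl_cat // catA monl_cat ?size_cat ?Ha ?Hx // eqseq_cat //.
  by case: (a' == a); case: (x' == x).
rewrite [RHS]monl_short ?size_cat //.
case: (leqP (size a) (size w)) => Ha; last by rewrite monl_short.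
rewrite -(cat_take_drop (size a) w) monl_cat ?size_takel //.
rewrite monl_short ?size_drop; last lia.
by case: (_ == a).
Qed.

Lemma assoc_mgm (K : fieldType) (a x : word) (g : elt K) :
  mulE (mon K a) (mulE g (mon K x)) = mulE (mulE (mon K a) g) (mon K x).
Proof.
apply: eltE => w.
case: (leqP (size a + size x) (size w)) => H.
  rewrite (split3 H); set a' := take _ w; set y := take _ _; set x' := drop _ w.
  have Ha : size a' = size a by rewrite /a' size_takel //; lia.
  have Hx : size x' = size x by rewrite /x' size_drop; lia.
  rewrite monl_cat // monr_cat // catA monr_cat // monl_cat //.
  by case: (a' == a); case: (x' == x).
case: (leqP (size a) (size w)) => Ha.
  have E : w = take (size a) w ++ drop (size a) w by rewrite cat_take_drop.
  have Ha' : size (take (size a) w) = size a by rewrite size_takel.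
  have Hd : (size (drop (size a) w) < size x)%N by rewrite size_drop; lia.
  rewrite {1}E (monl_cat _ _ Ha') (monr_short _ Hd).
  have -> : mulE (mulE (mon K a) g) (mon K x) w = 0.
    case: (leqP (size x) (size w)) => Hx; last by rewrite monr_short.
    have E2 : w = take (size w - size x) w ++ drop (size w - size x) w by rewrite cat_take_drop.
    have Hx' : size (drop (size w - size x) w) = size x by rewrite size_drop; lia.
    have Ht : (size (take (size w - size x) w) < size a)%N by rewrite size_takel; lia.
    rewrite E2 (monr_cat _ _ Hx') (monl_short _ Ht).
    by case: (_ == x).
  by case: (_ == a).
rewrite monl_short //.
case: (leqP (size x) (size w)) => Hx; last by rewrite monr_short.
have E : w = take (size w - size x) w ++ drop (size w - size x) w by rewrite cat_take_drop.
have Hx' : size (drop (size w - size x) w) = size x by rewrite size_drop; lia.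
have Ht : (size (take (size w - size x) w) < size a)%N by rewrite size_takel; lia.
rewrite E (monr_cat _ _ Hx') (monl_short _ Ht).
by case: (_ == x).
Qed.

Lemma assoc_gmm (K : fieldType) (x b : word) (g : elt K) :
  mulE (mulE g (mon K x)) (mon K b) = mulE g (mon K (x ++ b)).
Proof.
apply: eltE => w.
case: (leqP (size x + size b) (size w)) => H.
  have H' : (size w - size x - size b + size b <= size w)%N by lia.
  rewrite (split3 H'); set y := take _ w; set x' := take _ _; set b' := drop _ w.
  have Hb : size b' = size b by rewrite /b' size_drop; lia.
  have Hx : size x' = size x by rewrite /x' size_takel ?size_drop; lia.
  have Hxb : size (x' ++ b') = size (x ++ b) by rewrite !size_cat Hx Hb.
  rewrite catA (monr_cat _ _ Hb) (monr_cat _ _ Hx) -catA (monr_cat _ _ Hxb).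
  rewrite eqseq_cat //.
  by case: (x' == x); case: (b' == b).
rewrite [RHS]monr_short ?size_cat //.
case: (leqP (size b) (size w)) => Hb; last by rewrite monr_short.
have E : w = take (size w - size b) w ++ drop (size w - size b) w by rewrite cat_take_drop.
have Hb' : size (drop (size w - size b) w) = size b by rewrite size_drop; lia.
have Ht : (size (take (size w - size b) w) < size x)%N by rewrite size_takel; lia.
rewrite E (monr_cat _ _ Hb') (monr_short _ Ht).
by case: (_ == b).
Qed.

Lemma mon_nil_l (K : fieldType) (f : elt K) : mulE (mon K [::]) f = f.
Proof. by apply: eltE => w; rewrite mulE_monl /= take0 drop0. Qed.
Lemma mon_nil_r (K : fieldType) (f : elt K) : mulE f (mon K [::]) = f.
Proof. by apply: eltE => w; rewrite mulE_monr /= subn0 drop_size take_size. Qed.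

Definition raise (s : word) (q : nat) : word := set_nth 0%N s q (nth 0%N s q).+1.
Definition swap (s : word) (i j : nat) : word :=
  set_nth 0%N (set_nth 0%N s i (nth 0%N s j)) j (nth 0%N s i).

Lemma size_sn (s : word) q y : (q < size s)%N -> size (set_nth 0%N s q y) = size s.
Proof. by move=> H; rewrite size_set_nth; apply/maxn_idPr. Qed.

Lemma size_raise s q : (q < size s)%N -> size (raise s q) = size s.
Proof. by move=> H; rewrite /raise size_sn. Qed.
Lemma size_swap s i j : (i < size s)%N -> (j < size s)%N -> size (swap s i j) = size s.
Proof.
by move=> Hi Hj; rewrite /swap size_sn size_sn.
Qed.
Lemma nth_raise s q r : nth 0%N (raise s q) r = if r == q then (nth 0%N s q).+1 else nth 0%N s r.
Proof. by rewrite /raise nth_set_nth. Qed.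
Lemma nth_swap s i j r : nth 0%N (swap s i j) r =
  if r == j then nth 0%N s i else if r == i then nth 0%N s j else nth 0%N s r.
Proof. by rewrite /swap nth_set_nth /= nth_set_nth. Qed.


Lemma Dder_mon (K : fieldType) (s : word) :
  Dder (mon K s) = fun w => \sum_(q < size s) mon K (raise s q) w.
Proof.
apply: eltE => w; rewrite /Dder /mon.
case: (eqVneq (size w) (size s)) => Hsz.
  have key : forall q : nat, (q < size s)%N -> (w == raise s q) =
      (0 < nth 0%N w q)%N && (set_nth 0%N w q (nth 0%N w q).-1 == s).
    move=> q Hq'.
    apply/idP/idP.
      move/eqP => ->; rewrite nth_raise eqxx /=; apply/eqP.
      apply: (@eq_from_nth _ 0%N); first by rewrite size_sn ?size_raise.
      by move=> r _; rewrite nth_set_nth /= nth_raise; case: eqP => // ->.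
    move=> /andP [Hp /eqP E]; apply/eqP; rewrite -E.
    apply: (@eq_from_nth _ 0%N); first by rewrite size_raise ?size_sn ?Hsz.
    move=> r _; rewrite nth_raise !nth_set_nth /=; case: eqP => [->|//].
    by rewrite eqxx prednK.
  rewrite -Hsz; apply: eq_bigr => q _.
  rewrite (key q); last by rewrite -Hsz.
  by case: ifP.
rewrite [RHS]big1; last first.
  move=> q _; have -> // : (w == raise s q) = false.
  by apply/negbTE/eqP => E; move: Hsz; rewrite E size_raise // eqxx.
rewrite big1 // => q _; case: ifP => // _.
have -> // : (set_nth 0%N w q (nth 0%N w q).-1 == s) = false.
by apply/negbTE/eqP => E; move: Hsz; rewrite -E size_sn // eqxx.
Qed.

Lemma Dder_add (K : fieldType) (f g : elt K) : Dder (addE f g) = addE (Dder f) (Dder g).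
Proof.
apply: eltE => w; rewrite /Dder /addE -big_split /=; apply: eq_bigr => q _.
by case: ifP => _ //; rewrite addr0.
Qed.
Lemma Dder_scale (K : fieldType) c (f : elt K) : Dder (scaleE c f) = scaleE c (Dder f).
Proof.
apply: eltE => w; rewrite /Dder /scaleE mulr_sumr; apply: eq_bigr => q _.
by case: ifP; rewrite ?mulr0.
Qed.
Lemma Dder_0 (K : fieldType) : Dder (zeroE K) = zeroE K.
Proof. by apply: eltE => w; rewrite /Dder big1 // => q _; case: ifP. Qed.

Lemma span_sum_seq (K : fieldType) (P : elt K -> Prop) (I : Type) (r : seq I)
  (Pr : pred I) (F : I -> elt K) :
  (forall x, Pr x -> dspan P (F x)) -> dspan P (fun w => \sum_(x <- r | Pr x) F x w).
Proof.
move=> H; elim: r => [|x r IH].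
  have -> : (fun w => \sum_(x <- [::] | Pr x) F x w) = zeroE K by apply: eltE => w; rewrite big_nil.
  exact: span0.
case Hx: (Pr x).
  have -> : (fun w => \sum_(y <- x :: r | Pr y) F y w) = addE (F x) (fun w => \sum_(y <- r | Pr y) F y w).
    by apply: eltE => w; rewrite big_cons Hx.
  by apply: spanD => //; apply: H.
have -> : (fun w => \sum_(y <- x :: r | Pr y) F y w) = (fun w => \sum_(y <- r | Pr y) F y w).
  by apply: eltE => w; rewrite big_cons Hx.
done.
Qed.

Lemma span_sum_pair (K : fieldType) (P : elt K -> Prop) n (F : nat -> elt K) i j :
  i <> j -> (i < n)%N -> (j < n)%N ->
  (forall q, (q < n)%N -> q <> i -> q <> j -> dspan P (F q)) ->
  dspan P (addE (F i) (F j)) ->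
  dspan P (fun w => \sum_(q < n) F q w).
Proof.
move=> Hij Hi Hj Hq Hp.
have Hne : Ordinal Hj != Ordinal Hi by apply/eqP => E; apply: Hij; case: E.
have -> : (fun w => \sum_(q < n) F q w) = addE (addE (F i) (F j))
   (fun w => \sum_(q < n | (q != Ordinal Hi) && (q != Ordinal Hj)) F q w).
  apply: eltE => w; rewrite (bigD1 (Ordinal Hi)) //= (bigD1 (Ordinal Hj)) //=.
  by rewrite /addE addrA.
apply: spanD => //; apply: span_sum_seq => q /andP [H1 H2].
apply: Hq; first exact: ltn_ord.
  by move=> E; move: H1; rewrite -(inj_eq val_inj) /= E eqxx.
by move=> E; move: H2; rewrite -(inj_eq val_inj) /= E eqxx.
Qed.

Definition Gen (K : fieldType) (SP : nat -> Prop) (n : nat) (a : elt K) : Prop :=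
  exists s i j, [/\ SP i, SP j, i <> j, (i < n)%N && (j < n)%N & size s = n] /\
   ((nth 0%N s i = nth 0%N s j /\ a = mon K s) \/ a = addE (mon K s) (mon K (swap s i j))).

Ltac nthsolve := move=> r _; rewrite !(nth_raise, nth_swap);
  do ![case: eqP => ?; subst]; try congruence.

Lemma raise_swap_comm s i j q : (i < size s)%N -> (j < size s)%N -> (q < size s)%N ->
  q <> i -> q <> j -> raise (swap s i j) q = swap (raise s q) i j.
Proof.
move=> Hi Hj Hq Hqi Hqj; apply: (@eq_from_nth _ 0%N).
  by rewrite size_raise ?size_swap ?size_raise.
nthsolve.
Qed.

Lemma raise_j_swap s i j : (i < size s)%N -> (j < size s)%N -> i <> j ->
  raise (swap s i j) j = swap (raise s i) i j.
Proof.
move=> Hi Hj Hij; apply: (@eq_from_nth _ 0%N).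
  by rewrite size_raise ?size_swap ?size_raise.
nthsolve.
Qed.

Lemma raise_i_swap s i j : (i < size s)%N -> (j < size s)%N -> i <> j ->
  raise (swap s i j) i = swap (raise s j) i j.
Proof.
move=> Hi Hj Hij; apply: (@eq_from_nth _ 0%N).
  by rewrite size_raise ?size_swap ?size_raise.
nthsolve.
Qed.

Lemma raise_eq s i j : (i < size s)%N -> (j < size s)%N -> i <> j ->
  nth 0%N s i = nth 0%N s j -> raise s j = swap (raise s i) i j.
Proof.
move=> Hi Hj Hij E; apply: (@eq_from_nth _ 0%N).
  by rewrite size_raise ?size_swap ?size_raise.
nthsolve.
Qed.

Lemma Dder_span (K : fieldType) SP n (a : elt K) :
  dspan (Gen SP n) a -> dspan (Gen SP n) (Dder a).
Proof.
elim=> [b Hb | | b c _ IHb _ IHc | c b _ IH].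
- case: Hb => s [i [j [[Hi Hj Hij /andP [Hin Hjn] Hs] [[Heq ->]| ->]]]].
  + rewrite Dder_mon Hs.
    apply: (span_sum_pair (F := fun q => mon K (raise s q)) Hij Hin Hjn).
      move=> q Hq Hqi Hqj; apply: span_gen; exists (raise s q), i, j.
      split; first by split => //; rewrite ?Hin ?Hjn ?size_raise ?Hs.
      left; split => //; rewrite !nth_raise.
      by case: eqP => [?|_]; [congruence|case: eqP => [?|_]; [congruence|]].
    apply: span_gen; exists (raise s i), i, j.
    split; first by split => //; rewrite ?Hin ?Hjn ?size_raise ?Hs.
    right; rewrite (raise_eq (s := s) (i := i) (j := j)) ?Hs //.
  + rewrite Dder_add !Dder_mon size_swap ?Hs //.
    set sw := swap s i j.
    have -> : addE (fun w => \sum_(q < n) mon K (raise s q) w)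
                   (fun w => \sum_(q < n) mon K (raise sw q) w) =
              (fun w => \sum_(q < n) addE (mon K (raise s q)) (mon K (raise sw q)) w).
      by apply: eltE => w; rewrite /addE -big_split.
    apply: (span_sum_pair (F := fun q => addE (mon K (raise s q)) (mon K (raise sw q)))
      Hij Hin Hjn).
      move=> q Hq Hqi Hqj; apply: span_gen; exists (raise s q), i, j.
      split; first by split => //; rewrite ?Hin ?Hjn ?size_raise ?Hs.
      by right; rewrite /sw raise_swap_comm ?Hs.
    rewrite /sw raise_j_swap ?Hs // raise_i_swap ?Hs //.
    have -> : addE (addE (mon K (raise s i)) (mon K (swap (raise s j) i j)))
                   (addE (mon K (raise s j)) (mon K (swap (raise s i) i j))) =
              addE (addE (mon K (raise s i)) (mon K (swap (raise s i) i j)))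
                   (addE (mon K (raise s j)) (mon K (swap (raise s j) i j))).
      by apply: eltE => w; rewrite /addE; ring.
    apply: spanD; apply: span_gen.
      exists (raise s i), i, j; split; first by split => //; rewrite ?Hin ?Hjn ?size_raise ?Hs.
      by right.
    exists (raise s j), i, j; split; first by split => //; rewrite ?Hin ?Hjn ?size_raise ?Hs.
    by right.
- rewrite Dder_0; exact: span0.
- rewrite Dder_add; exact: spanD.
- rewrite Dder_scale; exact: spanZ.
Qed.

Lemma iterD_span (K : fieldType) SP n (a : elt K) t :
  dspan (Gen SP n) a -> dspan (Gen SP n) (iter t (@Dder K) a).
Proof. by move=> H; elim: t => [|t IH] //=; apply: Dder_span. Qed.

Lemma mon_finsupp (K : fieldType) u : finsupp (mon K u).
Proof.
exists [:: u] => w; rewrite /mon mem_seq1.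
by case: (eqVneq w u) => //= _; rewrite eqxx.
Qed.

Lemma mon_inAdeg (K : fieldType) u n : size u = n -> inAdeg n (mon K u).
Proof.
move=> Hs; split; first exact: mon_finsupp.
by move=> w; rewrite /mon; case: (eqVneq w u) => [->|_] /=; [rewrite Hs | rewrite eqxx].
Qed.

Lemma Bk_of (K : fieldType) k m (a' c : word) (z : elt K) :
  size a' = (m * Nk k)%N -> Zk k z -> Bk k (mulE (mulE (mon K a') z) (mon K c)).
Proof.
move=> Ha Hz; apply: span_gen; exists m, (mon K a'), z, (mon K c); split => //.
  exact: mon_inAdeg.
exact: mon_finsupp.
Qed.

Lemma letter_mid (s : word) L n r : (1 <= r <= n)%N ->
  letter (take n (drop L s)) r = nth 0%N s (L + r.-1).
Proof. by move=> H; rewrite /letter nth_take ?nth_drop //; lia. Qed.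

Lemma split_mid (s : word) L n : s = take L s ++ take n (drop L s) ++ drop (L + n) s.
Proof. by rewrite addnC -drop_drop !cat_take_drop. Qed.

Lemma Nk_gt0 k : (0 < Nk k)%N. Proof. by rewrite /Nk expn_gt0. Qed.
Lemma Mk_gt0 k : (0 < Mk k)%N. Proof. by rewrite /Mk expn_gt0. Qed.

Lemma bound_k k : (1 <= k)%N -> (3 ^ k * Mk k < Nk k)%N.
Proof.
case: k => [//|k] _; rewrite /Nk /Mk /=.
have -> : (100 ^ (k.+1 ^ 2) = 100 ^ (k ^ 2) * 100 ^ (k.*2.+1))%N.
  have -> : (k.+1 ^ 2 = k ^ 2 + k.*2.+1)%N by rewrite -!mulnn; lia.
  by rewrite expnD.
rewrite mulnC ltn_pmul2l ?expn_gt0 //.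
apply: (@leq_trans (100 ^ k.+1)); first by rewrite ltn_exp2r.
by rewrite leq_pexp2l //; lia.
Qed.

Lemma e_bounds k p : (1 <= k)%N -> (p <= k)%N -> (1 <= 3 ^ p * Mk k)%N /\ (3 ^ p * Mk k < Nk k)%N.
Proof.
move=> Hk Hp; split; first by rewrite muln_gt0 expn_gt0 Mk_gt0.
apply: leq_ltn_trans (bound_k Hk); rewrite leq_mul2r leq_pexp2l ?orbT //.
Qed.

Lemma e_inj k p q : (3 ^ p * Mk k = 3 ^ q * Mk k)%N -> p = q.
Proof. by move/eqP; rewrite eqn_pmul2r ?Mk_gt0 // eqn_exp2l // => /eqP. Qed.

Lemma e_lt k p q : (p < q)%N -> (3 ^ p * Mk k < 3 ^ q * Mk k)%N.
Proof. by move=> H; rewrite ltn_pmul2r ?Mk_gt0 // ltn_exp2l. Qed.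

Lemma Zk_pair (K : fieldType) k p q (x y : word) l1 l2 :
  size x = (Nk k).-1 -> size y = (Nk k).-1 -> (p < q <= k)%N -> l1 <> l2 ->
  letter x (3 ^ p * Mk k) = l1 -> letter x (3 ^ q * Mk k) = l2 ->
  letter y (3 ^ p * Mk k) = l2 -> letter y (3 ^ q * Mk k) = l1 ->
  (forall r, (1 <= r <= (Nk k).-1)%N -> r != (3 ^ p * Mk k)%N ->
            r != (3 ^ q * Mk k)%N -> letter x r = letter y r) ->
  Zk k (scaleE 1 (addE (mon K x) (mon K y))).
Proof.
move=> Hx Hy Hpq Hl H1 H2 H3 H4 Hr.
case: (ltngtP l2 l1) => Hlt; last by congruence.
- right; exists 1, x, y, p, q, l1, l2; split => //.
- rewrite addEC; right; exists 1, y, x, p, q, l2, l1; split => //.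
  split => // r R1 R2 R3; by rewrite Hr.
Qed.

Definition SPk k L (i : nat) : Prop := exists p, (p <= k)%N /\ i = (L + (3 ^ p * Mk k).-1)%N.

Lemma swap_same s i j : (i < size s)%N -> (j < size s)%N ->
  nth 0%N s i = nth 0%N s j -> swap s i j = s.
Proof.
move=> Hi Hj E; apply: (@eq_from_nth _ 0%N); first by rewrite size_swap.
move=> r _; rewrite nth_swap; do ![case: eqP => ?; subst]; congruence.
Qed.

Lemma swap_sym s i j : (i < size s)%N -> (j < size s)%N -> i <> j -> swap s i j = swap s j i.
Proof.
move=> Hi Hj E; apply: (@eq_from_nth _ 0%N); first by rewrite !size_swap.
move=> r _; rewrite !nth_swap; do ![case: eqP => ?; subst]; congruence.
Qed.

Lemma swap_take s i j L : (L <= i)%N -> (L <= j)%N -> (i < size s)%N -> (j < size s)%N ->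
  take L (swap s i j) = take L s.
Proof.
move=> H1 H2 Hi Hj; apply: (@eq_from_nth _ 0%N); first by rewrite !size_take size_swap.
move=> r; rewrite size_take_min size_swap // => Hr.
have HrL : (r < L)%N by lia.
rewrite !nth_take // nth_swap.
by case: eqP => [?|_]; [lia|case: eqP => [?|_] //; lia].
Qed.

Lemma swap_drop s i j D : (i < D)%N -> (j < D)%N -> (i < size s)%N -> (j < size s)%N ->
  drop D (swap s i j) = drop D s.
Proof.
move=> H1 H2 Hi Hj; apply: (@eq_from_nth _ 0%N); first by rewrite !size_drop size_swap.
move=> r _; rewrite !nth_drop nth_swap.
by case: eqP => [?|_]; [lia|case: eqP => [?|_] //; lia].
Qed.

Lemma conv1 (K : fieldType) k L m (a b s : word) p q :
  (1 <= k)%N -> (size a + L = m * Nk k)%N -> (L + (Nk k).-1 <= 2 * Nk k)%N ->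
  size s = (2 * Nk k)%N ->
  (p <= k)%N -> (q <= k)%N -> p <> q ->
  nth 0%N s (L + (3 ^ p * Mk k).-1) = nth 0%N s (L + (3 ^ q * Mk k).-1) ->
  Bk k (mon K (a ++ s ++ b)).
Proof.
move=> Hk HL HL2 Hs Hp Hq Hpq E.
wlog Hlt : p q Hp Hq Hpq E / (p < q)%N.
  move=> W; case: (ltngtP p q) => H; [exact: (W p q Hp Hq Hpq E H) | | congruence].
  by apply: (W q p) => //; congruence.
have Hs2 : size (take (Nk k).-1 (drop L s)) = (Nk k).-1.
  by rewrite size_takel // size_drop; lia.
have [Hp1 Hp2] := e_bounds Hk Hp.
have [Hq1 Hq2] := e_bounds Hk Hq.
have -> : mon K (a ++ s ++ b) = mulE (mulE (mon K (a ++ take L s))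
    (scaleE 1 (mon K (take (Nk k).-1 (drop L s))))) (mon K (drop (L + (Nk k).-1) s ++ b)).
  by rewrite scaleE1 !mon_cat {1}(split_mid s L (Nk k).-1) !catA.
apply: (Bk_of (m := m)); first by rewrite size_cat size_takel //; lia.
left; exists 1, (take (Nk k).-1 (drop L s)), p, q; split => //.
  by rewrite Hlt Hq.
by rewrite !letter_mid //; lia.
Qed.

Lemma conv2 (K : fieldType) k L m (a b s : word) p q :
  (1 <= k)%N -> (size a + L = m * Nk k)%N -> (L + (Nk k).-1 <= 2 * Nk k)%N ->
  size s = (2 * Nk k)%N -> (p < q)%N -> (q <= k)%N ->
  nth 0%N s (L + (3 ^ p * Mk k).-1) <> nth 0%N s (L + (3 ^ q * Mk k).-1) ->
  Bk k (addE (mon K (a ++ s ++ b))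
     (mon K (a ++ swap s (L + (3 ^ p * Mk k).-1) (L + (3 ^ q * Mk k).-1) ++ b))).
Proof.
move=> Hk HL HL2 Hs Hlt Hq E.
have Hp : (p <= k)%N by lia.
have [Hp1 Hp2] := e_bounds Hk Hp.
have [Hq1 Hq2] := e_bounds Hk Hq.
have Hel := e_lt k Hlt.
set i := (L + _)%N in E *; set j := (L + _)%N in E *.
have Hi : (i < size s)%N by rewrite /i Hs; lia.
have Hj : (j < size s)%N by rewrite /j Hs; lia.
set t := swap s i j.
have Ht : size t = size s by rewrite size_swap.
have Ht1 : take L t = take L s by rewrite swap_take // /i /j; lia.
have Ht3 : drop (L + (Nk k).-1) t = drop (L + (Nk k).-1) s by rewrite swap_drop // /i /j; lia.
set N1 := (Nk k).-1.
have -> : addE (mon K (a ++ s ++ b)) (mon K (a ++ t ++ b)) =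
  mulE (mulE (mon K (a ++ take L s))
    (scaleE 1 (addE (mon K (take N1 (drop L s))) (mon K (take N1 (drop L t))))))
    (mon K (drop (L + N1) s ++ b)).
  rewrite scaleE1 mulE_addr mulE_addl !mon_cat.
  rewrite {1}(split_mid s L N1) {1}(split_mid t L N1) Ht1 Ht3 !catA //.
apply: (Bk_of (m := m)); first by rewrite size_cat size_takel //; lia.
apply: (@Zk_pair _ k p q _ _ (nth 0%N s i) (nth 0%N s j)) => //.
- by rewrite size_takel // size_drop; lia.
- by rewrite size_takel // size_drop Ht; lia.
- by rewrite Hlt Hq.
- by rewrite letter_mid //; lia.
- by rewrite letter_mid //; lia.
- rewrite letter_mid; last lia.
  by rewrite /t nth_swap -/i eqxx; case: eqP => // ?; lia.
- by rewrite letter_mid ?/t ?nth_swap -?/j ?eqxx //; lia.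
- move=> r Hr Hrp Hrq; rewrite !letter_mid // /t nth_swap.
  have Hrj : (L + r.-1)%N != j.
    by apply: (contra _ Hrq) => /eqP Ej; apply/eqP; rewrite /j in Ej; lia.
  have Hri : (L + r.-1)%N != i.
    by apply: (contra _ Hrp) => /eqP Ej; apply/eqP; rewrite /i in Ej; lia.
  by rewrite (negbTE Hrj) (negbTE Hri).
Qed.

Lemma pigeon (f : nat -> nat) k : (forall p, (p <= k)%N -> (f p < k)%N) ->
  exists p q, (p < q <= k)%N /\ f p = f q.
Proof.
move=> Hf.
case: (boolP [exists p : 'I_k.+1, exists q : 'I_k.+1, (p < q)%N && (f p == f q)]).
  move/existsP => [p /existsP [q /andP [Hpq /eqP E]]]; exists p, q; split => //.
  by rewrite Hpq -ltnS ltn_ord.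
move=> Hn; exfalso.
have Hu : uniq (map f (iota 0 k.+1)).
  rewrite map_inj_in_uniq ?iota_uniq // => x y; rewrite !mem_iota /= !add0n => Hx Hy E.
  case: (ltngtP x y) => // H; exfalso; move/negP: Hn; apply; apply/existsP.
  - exists (Ordinal Hx); apply/existsP; exists (Ordinal Hy); by rewrite /= H E eqxx.
  - exists (Ordinal Hy); apply/existsP; exists (Ordinal Hx); by rewrite /= H E eqxx.
have Hsub : {subset map f (iota 0 k.+1) <= iota 0 k}.
  move=> z /mapP [x Hx ->]; rewrite mem_iota /= add0n; apply: Hf.
  by move: Hx; rewrite mem_iota.
by have := uniq_leq_size Hu Hsub; rewrite size_map !size_iota ltnn.
Qed.

Lemma conv (K : fieldType) k L m (a b : word) (X : elt K) :
  (1 <= k)%N -> (size a + L = m * Nk k)%N -> (L + (Nk k).-1 <= 2 * Nk k)%N ->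
  dspan (Gen (SPk k L) (2 * Nk k)) X -> Bk k (mulE (mulE (mon K a) X) (mon K b)).
Proof.
move=> Hk HL HL2; elim=> [g Hg | | g h _ IHg _ IHh | c g _ IH].
- case: Hg => s [i [j [[[p [Hp ->]] [q [Hq ->]] Hij _ Hs] [[E ->]| ->]]]].
    rewrite !mon_cat -catA.
    apply: (@conv1 K k L m a b s p q Hk HL HL2 Hs Hp Hq _ E) => Epq; apply: Hij; by rewrite Epq.
  have Hpq : p <> q by move=> Epq; apply: Hij; rewrite Epq.
  have [Hp1 Hp2] := e_bounds Hk Hp.
  have [Hq1 Hq2] := e_bounds Hk Hq.
  rewrite mulE_addr mulE_addl !mon_cat -!catA.
  set I := (L + _)%N in Hij *; set J := (L + _)%N in Hij *.
  have Hi : (I < size s)%N by rewrite /I Hs; lia.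
  have Hj : (J < size s)%N by rewrite /J Hs; lia.
  case: (eqVneq (nth 0%N s I) (nth 0%N s J)) => E.
    rewrite swap_same //; apply: spanD; exact: (@conv1 K k L m a b s p q Hk HL HL2 Hs Hp Hq Hpq E).
  case: (ltngtP p q) => H; last by [].
    exact: (@conv2 K k L m a b s p q Hk HL HL2 Hs H Hq (elimN eqP E)).
  rewrite swap_sym //.
  apply: (@conv2 K k L m a b s q p Hk HL HL2 Hs H Hp).
  by move=> E'; move/eqP: E; rewrite -/I -/J E'.
- rewrite mulE_0r mulE_0l; exact: Defs.span0.
- rewrite mulE_addr mulE_addl; exact: spanD.
- rewrite mulE_scaler mulE_scalel; exact: spanZ.
Qed.

Theorem mainTheorem4 (K : fieldType) (k : nat) :
  (1 <= k)%N -> forall a : elt K, Ik k a -> Bk k a.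
Proof.
move=> Hk f Hf.
have C : forall a b, Bk k (mulE (mulE (mon K a) f) (mon K b)).
  elim: Hf => [g Hg | | g h _ IHg _ IHh | c g _ IH | u g Hu _ IH | g v Hv _ IH] a b.
  - case: Hg => t [w [Hw Hall ->]].
    have HN := Nk_gt0 k.
    set N := Nk k in Hw *.
    pose m := ((size a + N.-1) %/ N)%N.
    have Hm1 : (m * N <= size a + N.-1)%N by apply: leq_trunc_div.
    have Hm2 : (size a + N.-1 < m.+1 * N)%N by apply: ltn_ceil.
    pose L := (m * N - size a)%N.
    have HL : (size a + L = m * N)%N by rewrite /L; lia.
    have HL2 : (L + N.-1 <= 2 * N)%N by rewrite /L; lia.
    apply: (@conv K k L m a b _ Hk HL HL2); apply: iterD_span.
    have Hf' : forall p, (p <= k)%N -> (nth 0%N w (L + (3 ^ p * Mk k).-1) < k)%N.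
      move=> p Hp; have [Hp1 Hp2] := e_bounds Hk Hp.
      have Hin : (L + (3 ^ p * Mk k).-1 < size w)%N by rewrite Hw /N; lia.
      by move/allP: Hall; apply; apply: mem_nth.
    have [p [q [Hpq E]]] := pigeon Hf'.
    apply: span_gen; exists w, (L + (3 ^ p * Mk k).-1)%N, (L + (3 ^ q * Mk k).-1)%N.
    have Hp : (p <= k)%N by lia.
    have Hq : (q <= k)%N by lia.
    have [Hp1 Hp2] := e_bounds Hk Hp.
    have [Hq1 Hq2] := e_bounds Hk Hq.
    have He := e_lt k (p := p) (q := q) (ltac:(lia)).
    split; last by left.
    split.
    - by exists p.
    - by exists q.
    - lia.
    - by apply/andP; split; lia.
    - by rewrite Hw.
  - rewrite mulE_0r mulE_0l; exact: Defs.span0.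
  - rewrite mulE_addr mulE_addl; apply: spanD; [exact: IHg | exact: IHh].
  - rewrite mulE_scaler mulE_scalel; apply: spanZ; exact: IH.
  - case: (decomp (proj1 Hu)) => S ->.
    rewrite mulE_sumL mulE_sumR mulE_sumL; apply: span_sumE => x.
    rewrite assoc_mm; exact: IH.
  - case: (decomp (proj1 Hv)) => S ->.
    rewrite mulE_sumR mulE_sumR mulE_sumL; apply: span_sumE => x.
    rewrite assoc_mgm assoc_gmm; exact: IH.
by have := C [::] [::]; rewrite mon_nil_l mon_nil_r.
Qed.
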